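(* Let $n,m$ be positive integers with $n>m$, both in canonical form, and let $k=n-m$. Then $n+(-m)\triangleq\{k-1\mid k+1\}\triangleq k+\underline{0}$, where $k-1,k+1,k$ are canonical integers and $\underline{0}\cong 1+(-1)$.
   Context: Games are short normal-play combinatorial games, written $G\cong\{L(G)\mid R(G)\}$, $\cong$ meaning identical literal forms. Canonical integers: $0\cong\{\ \mid\ \}$, $n\cong\{n-1\mid\ \}$ for $n>0$, $n\cong\{\ \mid n+1\}$ for $n<0$. Disjunctive sum $G+H\cong\{L(G)+H,G+L(H)\mid R(G)+H,G+R(H)\}$, negation $-G\cong\{-R(G)\mid -L(G)\}$. $\underline{0}$ denotes the literal game $1+(-1)\cong\{-1\mid 1\}$. Equivalence modulo domination: $G\triangleq H$ means that in $G+(-H)$, for every move by either player as first player in one summand, the other player has a response in the other summand after which the responder wins. *)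

(* Defs.v *)
From mathcomp Require Import all_boot.
Set Implicit Arguments. Unset Strict Implicit. Unset Printing Implicit Defensive.

(* Short games as literal forms {L | R} (finite lists of options). *)
Inductive game : Type := Game : seq game -> seq game -> game.

Definition Lopts (g : game) : seq game := let: Game l _ := g in l.
Definition Ropts (g : game) : seq game := let: Game _ r := g in r.

Fixpoint neg (g : game) : game :=
  match g with Game l r => Game (map neg r) (map neg l) end.

Fixpoint add (g : game) : game -> game :=
  fix addg (h : game) : game :=
    match g, h with
    | Game gl gr, Game hl hr =>
        Game (map (fun x => add x h) gl ++ map addg hl)
             (map (fun x => add x h) gr ++ map addg hr)
    end.

(* Normal play outcome: (Left wins moving first, Right wins moving first). *)
Fixpoint outc (g : game) : bool * bool :=
  match g with
  | Game l r => (has (fun x => ~~ (outc x).2) l, has (fun x => ~~ (outc x).1) r)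
  end.
Definition Lwins_first (g : game) : bool := (outc g).1.
Definition Rwins_first (g : game) : bool := (outc g).2.

Fixpoint cnat (n : nat) : game :=
  match n with 0 => Game [::] [::] | k.+1 => Game [:: cnat k] [::] end.

Definition zero_u : game := add (cnat 1) (neg (cnat 1)).

Fixpoint Lin (x : game) (s : seq game) : Prop :=
  match s with [::] => False | y :: t => y = x \/ Lin x t end.

(* Equivalence modulo domination G ≜ H: in G + (-H), every first move by
   either player in one summand has a response by the other player in the
   other summand after which the responder wins (the original mover being
   next to move in the resulting position). *)
Definition eqdom (g h : game) : Prop :=
  (forall x, Lin x (Lopts g) -> exists2 y, Lin y (Ropts (neg h)) & ~~ Lwins_first (add x y)) /\
  (forall y, Lin y (Lopts (neg h)) -> exists2 x, Lin x (Ropts g) & ~~ Lwins_first (add x y)) /\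
  (forall x, Lin x (Ropts g) -> exists2 y, Lin y (Lopts (neg h)) & ~~ Rwins_first (add x y)) /\
  (forall y, Lin y (Ropts (neg h)) -> exists2 x, Lin x (Lopts g) & ~~ Rwins_first (add x y)).

(* Main.v *)
Require Import Defs.
From Stdlib Require Import ZArith Lia.
From mathcomp Require Import all_boot zify.
Set Implicit Arguments.

Inductive P : game -> Z -> Prop :=
 PI l r v : (forall x, Lin x l -> P x (v-1)%Z) -> (forall x, Lin x r -> P x (v+1)%Z) ->
   ((0 < v)%Z -> exists x, Lin x l) -> ((v < 0)%Z -> exists x, Lin x r) -> P (Game l r) v.

Lemma hasLin (p : pred game) l : has p l = true <-> exists x, Lin x l /\ p x.
Proof.
elim: l => [|y t IH] /=; first by split => //; case=> x [].
split.
- case/orP=> [py|/IH [x [Hx px]]]; first by exists y; split=> //; left.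
  by exists x; split=> //; right.
- case=> x [[<-|Hx] px]; first by rewrite px.
  by apply/orP; right; apply/IH; exists x.
Qed.

Lemma Lin_app x l1 l2 : Lin x (l1 ++ l2) <-> Lin x l1 \/ Lin x l2.
Proof. elim: l1 => [|y t IH] /=; tauto. Qed.

Lemma Lin_map x f l : Lin x (map f l) <-> exists y, Lin y l /\ x = f y.
Proof.
elim: l => [|y t IH] /=; first by split=> //; case=> y [].
split.
- case=> [<-|H]; first by exists y; split=> //; left.
  case: (proj1 IH H) => z [Hz ->].
  by exists z; split=> //; right.
- case=> z [[<-|Hz] E]; first by left; rewrite E.
  by right; apply: (proj2 IH); exists z.
Qed.

Lemma P_outc g v : P g v -> outc g = (Z.ltb 0 v, Z.ltb v 0).
Proof.
elim=> {g v} l r v _ IHl _ IHr nl nr /=.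
have E1 : has (fun x => ~~ (outc x).2) l = Z.ltb 0 v.
  case: (Z.ltb_spec 0 v) => hv.
  - case: (nl hv) => x Hx; apply/hasLin; exists x; split=> //.
    rewrite IHl //=; apply/negP => /Z.ltb_lt; lia.
  - apply/negP => /hasLin [x [Hx]]; rewrite IHl //= => /negP; apply.
    apply/Z.ltb_lt; lia.
have E2 : has (fun x => ~~ (outc x).1) r = Z.ltb v 0.
  case: (Z.ltb_spec v 0) => hv.
  - case: (nr hv) => x Hx; apply/hasLin; exists x; split=> //.
    rewrite IHr //=; apply/negP => /Z.ltb_lt; lia.
  - apply/negP => /hasLin [x [Hx]]; rewrite IHr //= => /negP; apply.
    apply/Z.ltb_lt; lia.
by rewrite E1 E2.
Qed.

Lemma P_neg g v : P g v -> P (neg g) (- v).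
Proof.
elim=> {g v} l r v _ IHl _ IHr nl nr /=.
constructor.
- move=> x /Lin_map [y [Hy ->]]; have := IHr _ Hy.
  by have -> : (- (v + 1) = - v - 1)%Z by lia.
- move=> x /Lin_map [y [Hy ->]]; have := IHl _ Hy.
  by have -> : (- (v - 1) = - v + 1)%Z by lia.
- move=> h; case: (nr ltac:(lia)) => y Hy; exists (neg y); apply/Lin_map; by exists y.
- move=> h; case: (nl ltac:(lia)) => y Hy; exists (neg y); apply/Lin_map; by exists y.
Qed.

Lemma addE gl gr hl hr : add (Game gl gr) (Game hl hr) =
  Game (map (fun x => add x (Game hl hr)) gl ++ map (add (Game gl gr)) hl)
       (map (fun x => add x (Game hl hr)) gr ++ map (add (Game gl gr)) hr).
Proof. by []. Qed.

Lemma P_add g a : P g a -> forall h b, P h b -> P (add g h) (a + b).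
Proof.
elim=> {g a} gl gr a Hgl IHgl Hgr IHgr ngl ngr.
move=> h b Hh; elim: Hh => {h b} hl hr b Hhl IHhl Hhr IHhr nhl nhr.
rewrite addE; constructor.
- move=> x /Lin_app [/Lin_map [y [Hy ->]]|/Lin_map [y [Hy ->]]].
  + have := IHgl _ Hy _ _ (@PI hl hr b Hhl Hhr nhl nhr).
    by have -> : (a - 1 + b = a + b - 1)%Z by lia.
  + have := IHhl _ Hy.
    by have -> : (a + (b - 1) = a + b - 1)%Z by lia.
- move=> x /Lin_app [/Lin_map [y [Hy ->]]|/Lin_map [y [Hy ->]]].
  + have := IHgr _ Hy _ _ (@PI hl hr b Hhl Hhr nhl nhr).
    by have -> : (a + 1 + b = a + b + 1)%Z by lia.
  + have := IHhr _ Hy.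
    by have -> : (a + (b + 1) = a + b + 1)%Z by lia.
- move=> hv; case: (Z.ltb_spec 0 a) => ha.
  + case: (ngl ha) => y Hy; eexists; apply/Lin_app; left; apply/Lin_map; by exists y.
  + case: (nhl ltac:(lia)) => y Hy; eexists; apply/Lin_app; right; apply/Lin_map; by exists y.
- move=> hv; case: (Z.ltb_spec a 0) => ha.
  + case: (ngr ha) => y Hy; eexists; apply/Lin_app; left; apply/Lin_map; by exists y.
  + case: (nhr ltac:(lia)) => y Hy; eexists; apply/Lin_app; right; apply/Lin_map; by exists y.
Qed.

Lemma P_add' g h a b : P g a -> P h b -> P (add g h) (a + b).
Proof. by move=> Hg Hh; apply: P_add. Qed.

Lemma P_cnat n : P (cnat n) (Z.of_nat n).
Proof.
elim: n => [|n IH]; constructor => //; try (move=> *; lia).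
- move=> x [<-|[]]; by have -> : (Z.of_nat n.+1 - 1 = Z.of_nat n)%Z by lia.
- by move=> _; exists (cnat n); left.
Qed.

Lemma P_inv l r v : P (Game l r) v ->
  (forall x, Lin x l -> P x (v-1)%Z) /\ (forall x, Lin x r -> P x (v+1)%Z).
Proof. by move=> H; inversion H. Qed.

Lemma zero_sum x y a : P x a -> P y (- a) -> outc (add x y) = (false, false).
Proof.
move=> Hx Hy; rewrite (P_outc (P_add' Hx Hy)).
by have -> : (a + - a = 0)%Z by lia.
Qed.

Lemma eqdom_gen g h v : P g v -> P h v ->
  (exists x, Lin x (Lopts h)) -> (exists x, Lin x (Ropts h)) ->
  (exists x, Lin x (Lopts g)) -> (exists x, Lin x (Ropts g)) ->
  eqdom g h.
Proof.
case: g => gl gr; case: h => hl hr /= /P_inv [Pgl Pgr] /P_inv [Phl Phr]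
  [hl0 Hhl0] [hr0 Hhr0] [gl0 Hgl0] [gr0 Hgr0].
split; [|split; [|split]].
- move=> x Hx; exists (neg hl0); first by apply/Lin_map; exists hl0.
  by rewrite /Lwins_first (zero_sum (Pgl _ Hx) (P_neg (Phl _ Hhl0))).
- move=> y /Lin_map [y0 [Hy0 ->]]; exists gr0 => //.
  by rewrite /Lwins_first (zero_sum (Pgr _ Hgr0) (P_neg (Phr _ Hy0))).
- move=> x Hx; exists (neg hr0); first by apply/Lin_map; exists hr0.
  by rewrite /Rwins_first (zero_sum (Pgr _ Hx) (P_neg (Phr _ Hhr0))).
- move=> y /Lin_map [y0 [Hy0 ->]]; exists gl0 => //.
  by rewrite /Rwins_first (zero_sum (Pgl _ Hgl0) (P_neg (Phl _ Hy0))).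
Qed.

Theorem lemma3p2 (n m : nat) :
  0 < m -> m < n ->
  let k := n - m in
  eqdom (add (cnat n) (neg (cnat m))) (Game [:: cnat k.-1] [:: cnat k.+1]) /\
  eqdom (Game [:: cnat k.-1] [:: cnat k.+1]) (add (cnat k) zero_u).
Proof.
move=> hm hmn k.
have hk : 0 < k by rewrite /k subn_gt0.
have Ek : k = n - m by [].
clearbody k.
have PH : P (Game [:: cnat k.-1] [:: cnat k.+1]) (Z.of_nat k).
  constructor.
  - move=> x [<-|[]]; have := P_cnat k.-1.
    by have -> : Z.of_nat k.-1 = (Z.of_nat k - 1)%Z by move: hk; clear; case: k => // k0 _; rewrite -pred_Sn Nat2Z.inj_succ; lia.
  - move=> x [<-|[]]; have := P_cnat k.+1.
    by have -> : Z.of_nat k.+1 = (Z.of_nat k + 1)%Z by lia.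
  - by move=> _; eexists; left.
  - by move=> _; eexists; left.
have PG : P (add (cnat n) (neg (cnat m))) (Z.of_nat k).
  have := P_add' (P_cnat n) (P_neg (P_cnat m)).
  have -> : (Z.of_nat n + - Z.of_nat m = Z.of_nat k)%Z.
    rewrite Ek; lia.
  by [].
have PH2 : P (add (cnat k) zero_u) (Z.of_nat k).
  have := P_add' (P_cnat k) (P_add' (P_cnat 1) (P_neg (P_cnat 1))).
  by have -> : (Z.of_nat k + (Z.of_nat 1 + - Z.of_nat 1) = Z.of_nat k)%Z by lia.
split.
- apply: (eqdom_gen PG PH); try (by eexists; left).
  + case: (n) hmn => [|n'] //= _; case: (m) hm => [|m'] //= _; by eexists; left.
  + case: (n) hmn => [|n'] //= _; case: (m) hm => [|m'] //= _; by eexists; left.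
- apply: (eqdom_gen PH PH2); try (by eexists; left).
  + clear -hk; case: k hk => [|k'] //= _; by eexists; left.
  + clear -hk; case: k hk => [|k'] //= _; by eexists; left.
Qed.
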